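(* Let $\mathcal{N}$ be a real affine space and let $D$ be a convex subset of $\mathbb{R}\times\mathcal{N}$. Let $\mathcal{B}:D\to\mathbb{R}$ be continuous on every finite-dimensional affine subset of $D$, and let $c$ be a function on $D$. Suppose that whenever $(\mathbf{f},N),(\mathbf{f}_\pm,N_\pm)\in D$ satisfy $\mathbf{f}=(\mathbf{f}_++\mathbf{f}_-)/2$ and $N=(N_++N_-)/2$, we have $$\frac{\mathcal{B}(\mathbf{f}_+,N_+)+\mathcal{B}(\mathbf{f}_-,N_-)}{2}-\mathcal{B}(\mathbf{f},N)\ge c(\mathbf{f},N)\,|\mathbf{f}_+-\mathbf{f}|^2\ge0 .$$ Then for all $(\mathbf{f}_k,N_k)\in D$ and $\gamma_k\ge0$, $k=1,\dots,n$, with $\sum_{k=1}^n\gamma_k=1$, setting $\mathbf{f}=\sum_k\gamma_k\mathbf{f}_k$ and $N=\sum_k\gamma_kN_k$, we have $$-\mathcal{B}(\mathbf{f},N)+\sum_{k=1}^n\gamma_k\,\mathcal{B}(\mathbf{f}_k,N_k)\ge\frac14\,c(\mathbf{f},N)\Big(\sum_{k=1}^n\gamma_k|\mathbf{f}_k-\mathbf{f}|\Big)^2 .$$ *)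

(* Defs.v *)
From HB Require Import structures.
From mathcomp Require Import all_boot all_order all_algebra.
From mathcomp Require Import all_classical all_reals all_analysis.
Set Implicit Arguments. Unset Strict Implicit. Unset Printing Implicit Defensive.
Import Order.TTheory GRing.Theory Num.Theory.
Import numFieldNormedType.Exports.
Local Open Scope ring_scope.
Local Open Scope classical_set_scope.

(* The real affine space N is modelled as a real vector space V (choice of an
   origin); affine combinations are then linear combinations with weights
   summing to 1. *)

Definition convex_RV (R : realType) (V : lmodType R) (D : set (R * V)) : Prop :=
  forall x y, D x -> D y -> forall t : R, 0 <= t <= 1 ->
    D (t * x.1 + (1 - t) * y.1, t *: x.2 + (1 - t) *: y.2).

Definition acomb (R : realType) (V : lmodType R) (m : nat)
  (p : 'I_m -> R * V) (t : 'rV[R]_m) : R * V :=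
  (\sum_(i < m) t 0 i * (p i).1, \sum_(i < m) t 0 i *: (p i).2).

(* B is continuous on every finite-dimensional affine subset of D, i.e. on
   D ∩ L for every affine subspace L spanned by finitely many points p_i;
   L is parametrized by affine coordinates t (sum t_i = 1) with its
   canonical (Euclidean) topology. *)
Definition fd_affine_continuous (R : realType) (V : lmodType R)
  (D : set (R * V)) (B : R -> V -> R) : Prop :=
  forall (m : nat) (p : 'I_m -> R * V),
    {within [set t : 'rV[R]_m | \sum_(i < m) t 0 i = 1 /\ D (acomb p t)],
      continuous (fun t => B (acomb p t).1 (acomb p t).2)}.

(* Main.v *)
Require Import Defs.
From HB Require Import structures.
From mathcomp Require Import all_boot all_order all_algebra.
From mathcomp Require Import all_classical all_reals all_analysis.
From mathcomp Require Import ring lra.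
Import Order.TTheory GRing.Theory Num.Theory.
Import numFieldNormedType.Exports.
Local Open Scope ring_scope.
Local Open Scope classical_set_scope.
Set Implicit Arguments. Unset Strict Implicit. Unset Printing Implicit Defensive.

Lemma within_comp_sub {U W Z : topologicalType} (A : set U) (S : set W)
  (h : U -> W) (g : W -> Z) :
  (forall x, A x -> S (h x)) ->
  {within A, continuous h} -> {within S, continuous g} ->
  {within A, continuous (g \o h)}.
Proof.
move=> AS /subspace_continuousP ch /subspace_continuousP cg.
apply/subspace_continuousP => x Ax.
have hS : h @ within A (nbhs x) --> within S (nbhs (h x)).
  move=> Q; rewrite !nbhs_simpl /= => nQ.
  have := ch x Ax _ nQ; rewrite /= !nbhs_simpl /=.
  rewrite /within; apply: (@filterS _ (nbhs x)) => z Hz Az; apply: Hz => //; exact: AS.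
exact: (cvg_comp _ _ hS (cg _ (AS _ Ax))).
Qed.

Definition cb (R : realType) (V : lmodType R) (t : R) (x y : R * V) : R * V :=
  (t * x.1 + (1 - t) * y.1, t *: x.2 + (1 - t) *: y.2).

Lemma cb_mid (R : realType) (V : lmodType R) (s u : R) (x y : R * V) :
  cb ((s + u) / 2) x y = cb 2^-1 (cb s x y) (cb u x y).
Proof.
rewrite /cb /=; congr (_, _); first by field.
rewrite !scalerDr !scalerA addrACA -!scalerDl.
by congr (_ + _); congr (_ *: _); field.
Qed.

Lemma cb0 (R : realType) (V : lmodType R) (x y : R * V) : cb 0 x y = y.
Proof. by case: y => a b; rewrite /cb mul0r scale0r subr0 mul1r scale1r !add0r. Qed.

Lemma cb1 (R : realType) (V : lmodType R) (x y : R * V) : cb 1 x y = x.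
Proof. by case: x => a b; rewrite /cb subrr mul0r scale0r mul1r scale1r !addr0. Qed.

Lemma seg_cont (R : realType) (V : lmodType R) (D : set (R * V)) (B : R -> V -> R)
  (cvx : convex_RV D) (cont : fd_affine_continuous D B) (x y : R * V) :
  D x -> D y ->
  {within `[0, 1], continuous (fun t => B (cb t x y).1 (cb t x y).2)}.
Proof.
move=> Dx Dy.
pose p : 'I_2 -> R * V := fun i => if i == ord0 then x else y.
pose a : 'rV[R]_2 := \row_(j < 2) (j == ord0)%:R.
pose b : 'rV[R]_2 := \row_(j < 2) (j != ord0)%:R.
pose h : R -> 'rV[R]_2 := fun t => t *: a + (1 - t) *: b.
have hE t : acomb p (h t) = cb t x y.
  rewrite /acomb /cb !big_ord_recl !big_ord0 /h /a /b /p /= !mxE /=.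
  by rewrite !mulr1 !mulr0 !addr0 !add0r.
have ch : {within `[0, 1], continuous h}.
  apply: continuous_subspaceT => t; rewrite /h.
  apply: (@continuousD R 'rV[R]_2 R (fun s : R => s *: a) (fun s : R => (1 - s) *: b) t).
    by apply: continuousZr_tmp; exact: cvg_id.
  apply: continuousZr_tmp; exact: (cvgB (cvg_cst _) cvg_id).
have -> : (fun t => B (cb t x y).1 (cb t x y).2) =
    (fun s => B (acomb p s).1 (acomb p s).2) \o h.
  by apply: funext => t; rewrite /comp hE.
apply: (within_comp_sub _ ch (cont 2 p)) => t; rewrite /= in_itv /= => /andP[t0 t1].
split; last by rewrite hE; apply: cvx => //; rewrite t0 t1.
rewrite !big_ord_recl big_ord0 /h /a /b !mxE /=.
by rewrite !mulr1 !mulr0 !addr0 !add0r subrKC.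
Qed.

Lemma seg_convex (R : realType) (V : lmodType R) (D : set (R * V)) (B : R -> V -> R)
  (cvx : convex_RV D) (cont : fd_affine_continuous D B)
  (mid : forall x y, D x -> D y ->
     B (cb 2^-1 x y).1 (cb 2^-1 x y).2 <= (B x.1 x.2 + B y.1 y.2) / 2)
  (x y : R * V) (t : R) :
  D x -> D y -> 0 <= t <= 1 ->
  B (cb t x y).1 (cb t x y).2 <= t * B x.1 x.2 + (1 - t) * B y.1 y.2.
Proof.
move=> Dx Dy /andP[t0 t1].
set Bx := B x.1 x.2; set By := B y.1 y.2.
pose F := fun s => B (cb s x y).1 (cb s x y).2.
pose phi := fun s => F s - (s * Bx + (1 - s) * By).
have cF : {within `[0, 1], continuous F} := seg_cont cvx cont Dx Dy.
have cL : {within `[0, 1], continuous (fun s : R => s * Bx + (1 - s) * By)}.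
  apply: continuous_subspaceT => s.
  apply: cvgD; apply: cvgMl; first exact: cvg_id.
  exact: (cvgB (cvg_cst _) cvg_id).
have cphi : {within `[0, 1], continuous phi} := within_continuousB cF cL.
have phim s u : 0 <= s <= 1 -> 0 <= u <= 1 -> phi ((s + u) / 2) <= (phi s + phi u) / 2.
  move=> s01 u01.
  have Ds : D (cb s x y) by exact: cvx.
  have Du : D (cb u x y) by exact: cvx.
  have := mid _ _ Ds Du; rewrite -cb_mid /phi /F => H; lra.
have phi0 : phi 0 = 0 by rewrite /phi /F cb0 -/By; ring.
have phi1 : phi 1 = 0 by rewrite /phi /F cb1 -/Bx; ring.
have [c] := EVT_max ler01 cphi.
rewrite in_itv /= => /andP[c0 c1] cmax.
have Mt : phi t <= phi c by apply: cmax; rewrite in_itv /= t0 t1.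
rewrite -subr_le0; rewrite leNgt; apply/negP => pt.
have pc : 0 < phi c by apply: lt_le_trans Mt; rewrite /phi /F; lra.
have [ch|ch] := leP c (2^-1).
  have := phim 0 (2 * c).
  have -> : (0 + 2 * c) / 2 = c by field.
  move=> H.
  have H2 : phi (2 * c) <= phi c by apply: cmax; rewrite in_itv /=; apply/andP; split; lra.
  have : phi c <= (phi 0 + phi (2 * c)) / 2 by apply: H; apply/andP; split; lra.
  rewrite phi0; lra.
have := phim (2 * c - 1) 1.
have -> : (2 * c - 1 + 1) / 2 = c by field.
move=> H.
have H2 : phi (2 * c - 1) <= phi c by apply: cmax; rewrite in_itv /=; apply/andP; split; lra.
have : phi c <= (phi (2 * c - 1) + phi 1) / 2 by apply: H; apply/andP; split; lra.
rewrite phi1; lra.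
Qed.

Definition comb (R : realType) (V : lmodType R) (n : nat) (g : 'I_n -> R)
  (p : 'I_n -> R * V) : R * V :=
  (\sum_(k < n) g k * (p k).1, \sum_(k < n) g k *: (p k).2).

Lemma jensen (R : realType) (V : lmodType R) (D : set (R * V)) (B : R -> V -> R)
  (cvx : convex_RV D)
  (seg : forall x y t, D x -> D y -> 0 <= t <= 1 ->
     B (cb t x y).1 (cb t x y).2 <= t * B x.1 x.2 + (1 - t) * B y.1 y.2)
  n (p : 'I_n -> R * V) (g : 'I_n -> R) :
  (forall k, D (p k)) -> (forall k, 0 <= g k) -> \sum_(k < n) g k = 1 ->
  D (comb g p) /\
  B (comb g p).1 (comb g p).2 <= \sum_(k < n) g k * B (p k).1 (p k).2.
Proof.
elim: n p g => [|n IH] p g Dp g0.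
  by rewrite big_ord0 => /eqP; rewrite eq_sym oner_eq0.
rewrite /comb !big_ord_recr /=.
set gm := g ord_max => gs.
pose p' := fun i : 'I_n => p (widen_ord (leqnSn n) i).
have s0 : 0 <= \sum_(i < n) g (widen_ord (leqnSn n) i) by apply: sumr_ge0.
have [gm1|gm1] := eqVneq gm 1.
  have z : \sum_(i < n) g (widen_ord (leqnSn n) i) = 0 by rewrite gm1 in gs; lra.
  have zi : forall i : 'I_n, g (widen_ord (leqnSn n) i) = 0.
    move=> i; move/psumr_eq0P: z => -> //.
  rewrite !big1 => [| i _ | i _ | i _]; rewrite ?zi ?mul0r ?scale0r //.
  rewrite !add0r gm1 mul1r scale1r; case E: (p ord_max) => [a b] /=.
  by rewrite mul1r -E; split.
set s := \sum_(i < n) g (widen_ord (leqnSn n) i) in gs s0 *.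
have sgm : 1 - s = gm by lra.
have gm0 : 0 <= gm := g0 ord_max.
have sn0 : s != 0 by apply/eqP => s00; move: gm1; rewrite -sgm s00 subr0 eqxx.
have sp : 0 < s by rewrite lt_def sn0 s0.
pose g' := fun i : 'I_n => g (widen_ord (leqnSn n) i) / s.
have g'0 i : 0 <= g' i by rewrite /g' divr_ge0 // ltW.
have g's : \sum_(i < n) g' i = 1 by rewrite /g' -mulr_suml -/s divff.
have [Dc Bc] := IH p' g' (fun i => Dp _) g'0 g's.
have ceq : (\sum_(i < n) g (widen_ord (leqnSn n) i) * (p (widen_ord (leqnSn n) i)).1 +
    gm * (p ord_max).1,
    \sum_(i < n) g (widen_ord (leqnSn n) i) *: (p (widen_ord (leqnSn n) i)).2 +
    gm *: (p ord_max).2) = cb s (comb g' p') (p ord_max).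
  rewrite /cb /comb /= sgm; congr (_ + _, _ + _).
    rewrite mulr_sumr; apply: eq_bigr => i _; rewrite /g' /p'; field.
    exact: sn0.
  rewrite scaler_sumr; apply: eq_bigr => i _; rewrite scalerA /g' /p'.
  congr (_ *: _); field; exact: sn0.
split; first by rewrite ceq; apply: cvx => //; apply/andP; split; lra.
move: ceq => [-> ->].
have s01 : 0 <= s <= 1 by apply/andP; split; lra.
apply: le_trans (seg _ _ _ Dc (Dp ord_max) s01) _.
rewrite sgm lerD2r.
have E2 : s * \sum_(k < n) g' k * B (p' k).1 (p' k).2 =
    \sum_(i < n) g (widen_ord (leqnSn n) i) *
       B (p (widen_ord (leqnSn n) i)).1 (p (widen_ord (leqnSn n) i)).2.
  rewrite mulr_sumr; apply: eq_bigr => i _; rewrite /g' /p' mulrA.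
  congr (_ * _); field; exact: sn0.
by rewrite -E2 ler_wpM2l // ltW.
Qed.

Theorem lemma6p5 (R : realType) (V : lmodType R) (D : set (R * V))
  (B c : R -> V -> R) :
  convex_RV D ->
  fd_affine_continuous D B ->
  (forall (f fp fm : R) (N Np Nm : V),
     D (f, N) -> D (fp, Np) -> D (fm, Nm) ->
     f = (fp + fm) / 2 -> N = 2^-1 *: (Np + Nm) ->
     c f N * (fp - f) ^+ 2 <= (B fp Np + B fm Nm) / 2 - B f N /\
     0 <= c f N * (fp - f) ^+ 2) ->
  forall (n : nat) (fk : 'I_n -> R) (Nk : 'I_n -> V) (g : 'I_n -> R),
    (forall k, D (fk k, Nk k)) ->
    (forall k, 0 <= g k) ->
    \sum_(k < n) g k = 1 ->
    let f := \sum_(k < n) g k * fk k in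
    let N := \sum_(k < n) g k *: Nk k in
    4^-1 * c f N * (\sum_(k < n) g k * `|fk k - f|) ^+ 2
      <= - B f N + \sum_(k < n) g k * B (fk k) (Nk k).
Proof.
move=> cvx cont H n fk Nk g Dk g0 gs; cbv zeta.
set f := \sum_(k < n) g k * fk k.
set N := \sum_(k < n) g k *: Nk k.
have h2 : (1 - 2^-1 : R) = 2^-1 by field.
have mid : forall x y, D x -> D y ->
    B (cb 2^-1 x y).1 (cb 2^-1 x y).2 <= (B x.1 x.2 + B y.1 y.2) / 2.
  move=> [a b] [a' b'] Dx Dy.
  have h01 : 0 <= (2^-1 : R) <= 1.
    apply/andP; split; lra.
  have Dm : D (cb 2^-1 (a, b) (a', b')) := cvx _ _ Dx Dy 2^-1 h01.
  have E1 : (cb 2^-1 (a, b) (a', b')).1 = (a + a') / 2 by rewrite /cb /=; field.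
  have E2 : (cb 2^-1 (a, b) (a', b')).2 = 2^-1 *: (b + b').
    by rewrite /cb /= h2 scalerDr.
  have [H1 H2] := H _ _ _ _ _ _ Dm Dx Dy E1 E2.
  rewrite /=; lra.
have seg := seg_convex cvx cont mid.
pose p : 'I_n -> R * V := fun k => (fk k, Nk k).
have [DX BX] := jensen cvx seg (p:=p) Dk g0 gs.
have {}DX : D (f, N) := DX.
have {}BX : B f N <= \sum_(k < n) g k * B (fk k) (Nk k) := BX.
set A := \sum_(k < n) g k * `|fk k - f|.
have A0 : 0 <= A by apply: sumr_ge0 => k _; rewrite mulr_ge0.
have [->|An0] := eqVneq A 0; first by rewrite expr2 !mulr0; lra.
have Ap : 0 < A by rewrite lt_def An0 A0.
pose P := fun k : 'I_n => f <= fk k.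
set al := \sum_(k < n | P k) g k.
set be := \sum_(k < n | ~~ P k) g k.
have ab : al + be = 1 by rewrite -gs [RHS](bigID P).
set u := \sum_(k < n | P k) g k * (fk k - f).
set v := \sum_(k < n | ~~ P k) g k * (fk k - f).
have S0 : \sum_(k < n) g k * (fk k - f) = 0.
  under eq_bigr do rewrite mulrBr.
  by rewrite sumrB -mulr_suml gs mul1r subrr.
have uv : u + v = 0 by rewrite -S0 [RHS](bigID P).
have Au : A = u - v.
  rewrite /A (bigID P) /=; congr (_ + _).
    by rewrite /u; apply: eq_big => // k Pk; rewrite ger0_norm // subr_ge0; exact: Pk.
  have -> : - v = \sum_(k < n | ~~ P k) g k * (f - fk k).
    by rewrite /v -sumrN; apply: eq_big => // k _; ring.
  apply: eq_big => // k Pk; rewrite ltr0_norm ?opprB //.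
  by rewrite subr_lt0 ltNge; exact: Pk.
have alp : 0 < al.
  rewrite lt_def sumr_ge0 ?andbT //; apply/eqP => al0.
  have : u = 0.
    rewrite /u big1 // => k Pk.
    by rewrite (psumr_eq0P (fun i _ => g0 i) al0) ?mul0r.
  lra.
have bep : 0 < be.
  rewrite lt_def sumr_ge0 ?andbT //; apply/eqP => be0.
  have : v = 0.
    rewrite /v big1 // => k Pk.
    by rewrite (psumr_eq0P (fun i _ => g0 i) be0) ?mul0r.
  lra.
pose gP := fun k => if P k then g k / al else 0.
pose gN := fun k => if ~~ P k then g k / be else 0.
have gP0 k : 0 <= gP k by rewrite /gP; case: ifP => // _; rewrite divr_ge0 // ltW.
have gN0 k : 0 <= gN k by rewrite /gN; case: ifP => // _; rewrite divr_ge0 // ltW.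
have gPs : \sum_(k < n) gP k = 1.
  by rewrite /gP -big_mkcond /= -mulr_suml -/al divff // gt_eqF.
have gNs : \sum_(k < n) gN k = 1.
  by rewrite /gN -big_mkcond /= -mulr_suml -/be divff // gt_eqF.
have [DQp BQp] := jensen cvx seg (p:=p) Dk gP0 gPs.
have [DQn BQn] := jensen cvx seg (p:=p) Dk gN0 gNs.
set Qp := comb gP p in DQp BQp.
set Qn := comb gN p in DQn BQn.
set SP := \sum_(k < n | P k) g k * fk k.
set SN := \sum_(k < n | ~~ P k) g k * fk k.
set VP := \sum_(k < n | P k) g k *: Nk k.
set VN := \sum_(k < n | ~~ P k) g k *: Nk k.
set BP := \sum_(k < n | P k) g k * B (fk k) (Nk k).
set BN := \sum_(k < n | ~~ P k) g k * B (fk k) (Nk k).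
have SPN : SP + SN = f by rewrite /f [RHS](bigID P).
have VPN : VP + VN = N by rewrite /N [RHS](bigID P).
have BPN : BP + BN = \sum_(k < n) g k * B (fk k) (Nk k) by rewrite [RHS](bigID P).
have alne : al != 0 by rewrite gt_eqF.
have bene : be != 0 by rewrite gt_eqF.
have Qp1 : al * Qp.1 = SP.
  rewrite /Qp /comb /= mulr_sumr /SP [RHS]big_mkcond; apply: eq_bigr => k _.
  by rewrite /gP; case: ifP => _; [field | rewrite !mul0r mulr0].
have Qn1 : be * Qn.1 = SN.
  rewrite /Qn /comb /= mulr_sumr /SN [RHS]big_mkcond; apply: eq_bigr => k _.
  by rewrite /gN; case: ifP => _; [field | rewrite !mul0r mulr0].
have Qp2 : al *: Qp.2 = VP.
  rewrite /Qp /comb /= scaler_sumr /VP [RHS]big_mkcond; apply: eq_bigr => k _.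
  rewrite /gP; case: ifP => _; last by rewrite scale0r scaler0.
  by rewrite scalerA; congr (_ *: _); field.
have Qn2 : be *: Qn.2 = VN.
  rewrite /Qn /comb /= scaler_sumr /VN [RHS]big_mkcond; apply: eq_bigr => k _.
  rewrite /gN; case: ifP => _; last by rewrite scale0r scaler0.
  by rewrite scalerA; congr (_ *: _); field.
have QpB : al * B Qp.1 Qp.2 <= BP.
  have -> : BP = al * \sum_(k < n) gP k * B (p k).1 (p k).2.
    rewrite mulr_sumr /BP [LHS]big_mkcond; apply: eq_bigr => k _.
    by rewrite /gP; case: ifP => _; [field | rewrite !mul0r mulr0].
  by rewrite ler_wpM2l // ltW.
have QnB : be * B Qn.1 Qn.2 <= BN.
  have -> : BN = be * \sum_(k < n) gN k * B (p k).1 (p k).2.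
    rewrite mulr_sumr /BN [LHS]big_mkcond; apply: eq_bigr => k _.
    by rewrite /gN; case: ifP => _; [field | rewrite !mul0r mulr0].
  by rewrite ler_wpM2l // ltW.
have [m [alm [bem [m1 m0]]]] : exists m, al <= m /\ be <= m /\ m <= 1 /\ 0 < m.
  exists (Num.max al be); split; first by rewrite le_max lexx.
  split; first by rewrite le_max lexx orbT.
  split; first by rewrite ge_max; apply/andP; split; lra.
  by apply: lt_le_trans alp _; rewrite le_max lexx.
pose w := m^-1.
have w0 : 0 < w by rewrite invr_gt0.
have wm : w * m = 1 by rewrite mulVf // gt_eqF.
have w1 : 1 <= w by nra.
have w2 : w <= 2 by nra.
pose tp := al * w.
pose tn := be * w.
have tp01 : 0 <= tp <= 1 by apply/andP; split; rewrite /tp; nra.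
have tn01 : 0 <= tn <= 1 by apply/andP; split; rewrite /tn; nra.
have DPp := cvx _ _ DQp DX tp tp01.
have DPn := cvx _ _ DQn DX tn tn01.
have Pp1 : (cb tp Qp (f, N)).1 = w * SP + (1 - tp) * f.
  rewrite /cb -Qp1 /tp /=; ring.
have Pn1 : (cb tn Qn (f, N)).1 = w * SN + (1 - tn) * f.
  rewrite /cb -Qn1 /tn /=; ring.
have Pp2 : (cb tp Qp (f, N)).2 = w *: VP + (1 - tp) *: N.
  by rewrite /cb -Qp2 scalerA /tp (mulrC al).
have Pn2 : (cb tn Qn (f, N)).2 = w *: VN + (1 - tn) *: N.
  by rewrite /cb -Qn2 scalerA /tn (mulrC be).
have htt : tp + tn = w by rewrite /tp /tn -mulrDl ab mul1r.
have E1 : f = ((cb tp Qp (f, N)).1 + (cb tn Qn (f, N)).1) / 2.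
  rewrite Pp1 Pn1.
  have -> : SN = f - SP by lra.
  have -> : tn = w - tp by lra.
  by field.
have E2 : N = 2^-1 *: ((cb tp Qp (f, N)).2 + (cb tn Qn (f, N)).2).
  rewrite Pp2 Pn2.
  have -> : VN = N - VP by rewrite -VPN addrC addKr.
  rewrite scalerBr addrACA (addrC (w *: VP)) subrK -!scalerDl scalerA.
  have -> : 2^-1 * (w + (1 - tp + (1 - tn))) = 1.
    have -> : tn = w - tp by lra.
    by field.
  by rewrite scale1r.
have [Hc1 Hc2] := H _ _ _ _ _ _ DX DPp DPn E1 E2.
have ueq : u = SP - al * f.
  rewrite /u /SP /al mulr_suml -sumrB.
  by apply: eq_bigr => k _; rewrite mulrBr.
have uA : u = A / 2 by lra.
have dE : (cb tp Qp (f, N)).1 - f = w * A / 2.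
  rewrite Pp1 /tp.
  have -> : SP = u + al * f by lra.
  rewrite uA; ring.
rewrite dE in Hc1 Hc2.
have c0 : 0 <= c f N.
  move: Hc2; rewrite pmulr_lge0 //; apply: exprn_gt0.
  by rewrite !mulr_gt0 // invr_gt0 ltr0n.
have hp := seg _ _ _ DQp DX tp01.
have hn := seg _ _ _ DQn DX tn01.
rewrite /= in hp hn.
have hh1 : tp * B Qp.1 Qp.2 <= w * BP.
  by rewrite /tp (mulrC al) -mulrA ler_wpM2l // ltW.
have hh2 : tn * B Qn.1 Qn.2 <= w * BN.
  by rewrite /tn (mulrC be) -mulrA ler_wpM2l // ltW.
have htt' : tp * B f N + tn * B f N = w * B f N by rewrite -mulrDl htt.
have J0 : 0 <= BP + BN - B f N by lra.
have hJ : w * (BP + BN - B f N) <= 2 * (BP + BN - B f N) by rewrite ler_wpM2r.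
have lb : 0 <= c f N * A ^+ 2 * (w ^+ 2 - 1).
  rewrite !mulr_ge0 ?sqr_ge0 // subr_ge0.
  by rewrite -(expr1n _ 2) ler_pXn2r // ?nnegrE ltW // (lt_le_trans ltr01).
rewrite -BPN.
have Ex : c f N * (w * A / 2) ^+ 2 = 4^-1 * c f N * A ^+ 2 + 4^-1 * (c f N * A ^+ 2 * (w ^+ 2 - 1)).
  by field.
rewrite Ex in Hc1.
lra.
Qed.
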